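(* Let $\mathbb{H}=\{z\in\mathbb{C}:\operatorname{Im}z>0\}$. For all $z_1,z_2\in\mathbb{H}$, \[ b_{\mathbb{H},2}(z_1,z_2)=\frac{\sqrt2\,|z_1-z_2|}{\sqrt{|z_1-z_2|^2+|\operatorname{Im}(z_1+z_2)|^2}}=\frac{|z_1-z_2|}{\sqrt{|z_1-m|^2+|z_2-m|^2}}, \] where $m=\operatorname{Re}(z_1+z_2)/2$ (viewed as a point of the real axis).
   Context: For a domain $G\subsetneq\mathbb{C}$ and $z_1,z_2\in G$, $b_{G,2}(z_1,z_2)=\sup_{z\in\partial G}\frac{|z_1-z_2|}{\sqrt{|z_1-z|^2+|z-z_2|^2}}$. *)

(* Defs.v *)
From Stdlib Require Import Reals.
From Coquelicot Require Import Coquelicot.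
Open Scope R_scope.

Definition boundary (G : C -> Prop) (z : C) : Prop :=
  forall eps : R, 0 < eps ->
    (exists w : C, G w /\ Cmod (w - z) < eps) /\
    (exists w : C, ~ G w /\ Cmod (w - z) < eps).

Definition b_G2 (G : C -> Prop) (z1 z2 : C) : Rbar :=
  Lub_Rbar (fun r : R => exists z : C, boundary G z /\
    r = Cmod (z1 - z2) / sqrt (Cmod (z1 - z) ^ 2 + Cmod (z - z2) ^ 2)).

Definition UHP (z : C) : Prop := 0 < Im z.

(* Main.v *)
Require Import Defs.
From Stdlib Require Import Reals Lra Psatz.
From Coquelicot Require Import Coquelicot.
Open Scope R_scope.

Lemma abs_im_le (u : C) : Rabs (Im u) <= Cmod u.
Proof.
  unfold Cmod. rewrite <- sqrt_Rsqr_abs. apply sqrt_le_1_alt.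
  unfold Rsqr, Im. simpl. nra.
Qed.

Lemma abs_sq (x : R) : Rabs x ^ 2 = x ^ 2.
Proof. rewrite <- !Rsqr_pow2, <- Rsqr_abs. reflexivity. Qed.

Lemma bnd_real (z : C) : boundary UHP z -> Im z = 0.
Proof.
  intros H. destruct (Rtotal_order (Im z) 0) as [Hl|[He|Hg]]; auto.
  - destruct (H (- Im z)) as [[w [Hw1 Hw2]] _]; [lra|].
    pose proof (abs_im_le (w - z)). unfold UHP in Hw1.
    assert (Im (w - z) = Im w - Im z) by (destruct w, z; simpl; ring).
    rewrite H1 in H0. exfalso. pose proof (Rle_abs (Im w - Im z)). lra.
  - destruct (H (Im z)) as [_ [w [Hw1 Hw2]]]; [lra|].
    pose proof (abs_im_le (w - z)). unfold UHP in Hw1.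
    assert (Im (w - z) = Im w - Im z) by (destruct w, z; simpl; ring).
    rewrite H1 in H0. exfalso. apply Rnot_lt_le in Hw1.
    pose proof (Rle_abs (- (Im w - Im z))). rewrite Rabs_Ropp in H2. lra.
Qed.

Lemma cmod_imag (e : R) : Cmod (0, e) = Rabs e.
Proof. unfold Cmod. simpl. rewrite <- sqrt_Rsqr_abs. f_equal. unfold Rsqr. ring. Qed.

Lemma real_bnd (x : R) : boundary UHP (RtoC x).
Proof.
  intros eps Heps. split.
  - exists (x, (eps/2)%R). split. unfold UHP. simpl. lra.
    replace ((x, (eps/2)%R) - RtoC x)%C with ((0, (eps/2)%R) : C).
    rewrite cmod_imag, Rabs_pos_eq; lra.
    unfold Cminus, Cplus, Copp, RtoC. simpl. f_equal; ring.
  - exists (x, (- (eps/2))%R). split. unfold UHP. simpl. lra.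
    replace ((x, (- (eps/2))%R) - RtoC x)%C with ((0, (- (eps/2))%R) : C).
    rewrite cmod_imag, Rabs_Ropp, Rabs_pos_eq; lra.
    unfold Cminus, Cplus, Copp, RtoC. simpl. f_equal; ring.
Qed.

Theorem theorem3p12 (z1 z2 : C) (h1 : UHP z1) (h2 : UHP z2) :
  let m : C := RtoC (Re (z1 + z2) / 2) in
  b_G2 UHP z1 z2 =
    Finite (sqrt 2 * Cmod (z1 - z2) /
            sqrt (Cmod (z1 - z2) ^ 2 + Rabs (Im (z1 + z2)) ^ 2)) /\
  sqrt 2 * Cmod (z1 - z2) /
    sqrt (Cmod (z1 - z2) ^ 2 + Rabs (Im (z1 + z2)) ^ 2) =
  Cmod (z1 - z2) / sqrt (Cmod (z1 - m) ^ 2 + Cmod (z2 - m) ^ 2).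
Proof.
  intros m.
  destruct z1 as [a b], z2 as [c d]. unfold UHP in h1, h2. simpl in h1, h2.
  set (D := Cmod ((a, b) - (c, d))%C).
  assert (HD : 0 <= D) by apply Cmod_ge_0.
  set (S := fun z : C => Cmod ((a, b) - z)%C ^ 2 + Cmod (z - (c, d))%C ^ 2).
  assert (HS : forall x : R, S (RtoC x) = (a - x)^2 + b^2 + (x - c)^2 + d^2).
  { intros x. unfold S. rewrite !Cmod2_alt. simpl. ring. }
  set (mm := (a + c) / 2).
  assert (Hm : m = RtoC mm) by (unfold m, mm; simpl; reflexivity).
  assert (Smpos : 0 < S (RtoC mm)) by (rewrite HS; pose proof (pow2_ge_0 (a - mm)); pose proof (pow2_ge_0 (mm - c)); nra).
  assert (E2 : Cmod ((a, b) - m)%C ^ 2 + Cmod ((c, d) - m)%C ^ 2 = S (RtoC mm)).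
  { rewrite HS, Hm, !Cmod2_alt. simpl. ring. }
  assert (E1 : Cmod ((a, b) - (c, d))%C ^ 2 + Rabs (Im ((a, b) + (c, d))%C) ^ 2
               = 2 * S (RtoC mm)).
  { rewrite HS, Cmod2_alt, abs_sq.
    simpl. unfold mm. field. }
  assert (Eq : sqrt 2 * D / sqrt (D ^ 2 + Rabs (Im ((a, b) + (c, d))%C) ^ 2)
               = D / sqrt (S (RtoC mm))).
  { unfold D. rewrite E1, sqrt_mult by lra.
    assert (0 < sqrt 2) by (apply sqrt_lt_R0; lra).
    assert (0 < sqrt (S (RtoC mm))) by (apply sqrt_lt_R0; lra).
    field. split; lra. }
  fold D. rewrite E2, Eq. split; [|reflexivity].
  unfold b_G2. apply is_lub_Rbar_unique. split.
  - intros r [z [Hz Hr]]. subst r. simpl.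
    pose proof (bnd_real z Hz) as Hi. destruct z as [x y]. simpl in Hi. subst y.
    change (x, 0) with (RtoC x).
    fold D. change (D / sqrt (S (RtoC x)) <= D / sqrt (S (RtoC mm))).
    assert (Sle : S (RtoC mm) <= S (RtoC x)).
    { rewrite !HS. assert (Ex : (a-x)^2+b^2+(x-c)^2+d^2 - ((a-mm)^2+b^2+(mm-c)^2+d^2) = 2*(x-mm)^2) by (unfold mm; field). pose proof (pow2_ge_0 (x-mm)). lra. }
    assert (0 < sqrt (S (RtoC mm))) by (apply sqrt_lt_R0; lra).
    unfold Rdiv. apply Rmult_le_compat_l; [lra|].
    apply Rinv_le_contravar; [lra|]. apply sqrt_le_1_alt; lra.
  - intros bb Hb. apply Hb. exists (RtoC mm). split; [apply real_bnd|].
    reflexivity.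
Qed.
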